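(* Let $S$ be a functional PTS specification. For all terms $M,N,A,B$ of the $\lambda\Pi/S$ syntax such that the relevant inverse translations are defined: (1) if $M\longrightarrow_{\beta R}N$ then $\varphi(M)\longrightarrow_\beta^*\varphi(N)$; (2) if $A\longrightarrow_{\beta R}B$ then $\psi(A)\longrightarrow_\beta^*\psi(B)$.
   Context: $S=(\mathcal S,\mathcal A,\mathcal R)$ is a PTS specification (sorts, axioms $(s_1:s_2)$, rules $(s_1,s_2,s_3)$). Terms are $s\mid x\mid M\,N\mid\lambda x:A.M\mid\Pi x:A.B$ over constants $u_s,\varepsilon_s$ ($s\in\mathcal S$), $\dot s_1$ ($(s_1:s_2)\in\mathcal A$), $\dot\pi_{s_1s_2s_3}$ ($(s_1,s_2,s_3)\in\mathcal R$). $\longrightarrow_{\beta R}$ is the union of $\beta$-reduction and the contextual closure of the rewrite rules $\varepsilon_{s_2}\,\dot s_1\longrightarrow u_{s_1}$ for $(s_1:s_2)\in\mathcal A$ and $\varepsilon_{s_3}(\dot\pi_{s_1s_2s_3}\,A\,B)\longrightarrow\Pi x:\varepsilon_{s_1}A.\,\varepsilon_{s_2}(B\,x)$ for $(s_1,s_2,s_3)\in\mathcal R$ (for arbitrary terms $A,B$). Inverse translations (partial): $\varphi(\dot s)=s$, $\varphi(\dot\pi_{s_1s_2s_3})=\lambda\alpha:s_1.\lambda\beta:(\alpha\to s_2).\Pi x:\alpha.\beta\,x$, $\varphi(x)=x$, $\varphi(M\,N)=\varphi(M)\varphi(N)$, $\varphi(\lambda x:A.M)=\lambda x:\psi(A).\varphi(M)$;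 $\psi(u_s)=s$, $\psi(\varepsilon_sM)=\varphi(M)$, $\psi(\Pi x:A.B)=\Pi x:\psi(A).\psi(B)$. *)

(* Defs.v *)
From Stdlib Require Import Arith Relations.
Set Implicit Arguments.

Record pts_spec := {
  sort : Type;
  axiom : sort -> sort -> Prop;          (* (s1 : s2) in A *)
  rule : sort -> sort -> sort -> Prop
}.

Definition functional_spec (P : pts_spec) : Prop :=
  (forall s1 s2 s2', axiom P s1 s2 -> axiom P s1 s2' -> s2 = s2') /\
  (forall s1 s2 s3 s3', rule P s1 s2 s3 -> rule P s1 s2 s3' -> s3 = s3').

Inductive pterm (S : Type) : Type :=
| PSort : S -> pterm S
| PVar : nat -> pterm S
| PApp : pterm S -> pterm S -> pterm S
| PLam : pterm S -> pterm S -> pterm S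
| PPi : pterm S -> pterm S -> pterm S.
Arguments PVar {S} _.

Fixpoint plift S (d k : nat) (M : pterm S) : pterm S :=
  match M with
  | PSort s => PSort s
  | PVar n => if n <? k then PVar n else PVar (n + d)
  | PApp M N => PApp (plift d k M) (plift d k N)
  | PLam A M => PLam (plift d k A) (plift d (Datatypes.S k) M)
  | PPi A B => PPi (plift d k A) (plift d (Datatypes.S k) B)
  end.

Fixpoint psubst S (k : nat) (N M : pterm S) : pterm S :=
  match M with
  | PSort s => PSort s
  | PVar n => match Nat.compare n k with
              | Lt => PVar n
              | Eq => plift k 0 N
              | Gt => PVar (pred n)
              end
  | PApp M1 M2 => PApp (psubst k N M1) (psubst k N M2)
  | PLam A M1 => PLam (psubst k N A) (psubst (Datatypes.S k) N M1)
  | PPi A B => PPi (psubst k N A) (psubst (Datatypes.S k) N B)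
  end.

Inductive pbeta S : pterm S -> pterm S -> Prop :=
| pbeta_redex : forall A M N, pbeta (PApp (PLam A M) N) (psubst 0 N M)
| pbeta_appl : forall M M' N, pbeta M M' -> pbeta (PApp M N) (PApp M' N)
| pbeta_appr : forall M N N', pbeta N N' -> pbeta (PApp M N) (PApp M N')
| pbeta_laml : forall A A' M, pbeta A A' -> pbeta (PLam A M) (PLam A' M)
| pbeta_lamr : forall A M M', pbeta M M' -> pbeta (PLam A M) (PLam A M')
| pbeta_pil : forall A A' B, pbeta A A' -> pbeta (PPi A B) (PPi A' B)
| pbeta_pir : forall A B B', pbeta B B' -> pbeta (PPi A B) (PPi A B').

Definition pbeta_star S := clos_refl_trans (pterm S) (@pbeta S).

Inductive lpsort := LType | LKind.

Inductive lpterm (S : Type) : Type :=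
| LSort : lpsort -> lpterm S
| LVar : nat -> lpterm S
| LApp : lpterm S -> lpterm S -> lpterm S
| LLam : lpterm S -> lpterm S -> lpterm S
| LPi : lpterm S -> lpterm S -> lpterm S
| Cu : S -> lpterm S
| Ceps : S -> lpterm S
| Cdot : S -> lpterm S
| Cpi : S -> S -> S -> lpterm S.
Arguments LSort {S} _.
Arguments LVar {S} _.

(** only the constants of the signature of lambda-Pi/S occur in M *)
Fixpoint wf_lp (P : pts_spec) (M : lpterm (sort P)) : Prop :=
  match M with
  | LSort _ | LVar _ | Cu _ | Ceps _ => True
  | LApp M N | LLam M N | LPi M N => wf_lp P M /\ wf_lp P N
  | Cdot s1 => exists s2, axiom P s1 s2
  | Cpi s1 s2 s3 => rule P s1 s2 s3
  end.

Fixpoint llift S (d k : nat) (M : lpterm S) : lpterm S :=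
  match M with
  | LVar n => if n <? k then LVar n else LVar (n + d)
  | LApp M N => LApp (llift d k M) (llift d k N)
  | LLam A M => LLam (llift d k A) (llift d (Datatypes.S k) M)
  | LPi A B => LPi (llift d k A) (llift d (Datatypes.S k) B)
  | c => c
  end.

Fixpoint lsubst S (k : nat) (N M : lpterm S) : lpterm S :=
  match M with
  | LVar n => match Nat.compare n k with
              | Lt => LVar n
              | Eq => llift k 0 N
              | Gt => LVar (pred n)
              end
  | LApp M1 M2 => LApp (lsubst k N M1) (lsubst k N M2)
  | LLam A M1 => LLam (lsubst k N A) (lsubst (Datatypes.S k) N M1)
  | LPi A B => LPi (lsubst k N A) (lsubst (Datatypes.S k) N B)
  | c => c
  end.

Inductive red_betaR (P : pts_spec) : lpterm (sort P) -> lpterm (sort P) -> Prop :=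
| rb_beta : forall A M N, red_betaR P (LApp (LLam A M) N) (lsubst 0 N M)
| rb_ax : forall s1 s2, axiom P s1 s2 ->
    red_betaR P (LApp (Ceps s2) (Cdot s1)) (Cu s1)
| rb_rule : forall s1 s2 s3 A B, rule P s1 s2 s3 ->
    red_betaR P (LApp (Ceps s3) (LApp (LApp (Cpi s1 s2 s3) A) B))
      (LPi (LApp (Ceps s1) A)
           (LApp (Ceps s2) (LApp (llift 1 0 B) (LVar 0))))
| rb_appl : forall M M' N, red_betaR P M M' -> red_betaR P (LApp M N) (LApp M' N)
| rb_appr : forall M N N', red_betaR P N N' -> red_betaR P (LApp M N) (LApp M N')
| rb_laml : forall A A' M, red_betaR P A A' -> red_betaR P (LLam A M) (LLam A' M)
| rb_lamr : forall A M M', red_betaR P M M' -> red_betaR P (LLam A M) (LLam A M')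
| rb_pil : forall A A' B, red_betaR P A A' -> red_betaR P (LPi A B) (LPi A' B)
| rb_pir : forall A B B', red_betaR P B B' -> red_betaR P (LPi A B) (LPi A B').

Fixpoint phi S (M : lpterm S) : option (pterm S) :=
  match M with
  | Cdot s => Some (PSort s)
  | Cpi s1 s2 s3 =>
      (* \alpha:s1. \beta:(alpha -> s2). Pi x:alpha. beta x *)
      Some (PLam (PSort s1)
             (PLam (PPi (PVar 0) (PSort s2))
                   (PPi (PVar 1) (PApp (PVar 1) (PVar 0)))))
  | LVar n => Some (PVar n)
  | LApp M N =>
      match phi M, phi N with
      | Some M', Some N' => Some (PApp M' N')
      | _, _ => None
      end
  | LLam A M =>
      match psi A, phi M with
      | Some A', Some M' => Some (PLam A' M')
      | _, _ => None
      end
  | _ => None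
  end
with psi S (A : lpterm S) : option (pterm S) :=
  match A with
  | Cu s => Some (PSort s)
  | LApp (Ceps _) M => phi M
  | LPi A B =>
      match psi A, psi B with
      | Some A', Some B' => Some (PPi A' B')
      | _, _ => None
      end
  | _ => None
  end.

(* Main.v *)
Require Import Defs.
From Stdlib Require Import Relations Arith Lia.

Ltac dest1 H := repeat match type of H with
  | match ?e with _ => _ end = Some _ =>
      let E := fresh "E" in destruct e eqn:E; try discriminate H
  | Some _ = Some _ => injection H; clear H; intro H; subst
  end.

Ltac destall := repeat match goal with
  | H : match ?e with _ => _ end = Some _ |- _ =>
      let E := fresh "E" in destruct e eqn:E; try discriminate H
  | H : Some _ = Some _ |- _ => injection H; clear H; intros; subst
  end.
Section X.
Variable S : Type.

Ltac dest := repeat match goal with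
  | H : match ?e with _ => _ end = Some _ |- _ =>
      let E := fresh "E" in destruct e eqn:E; try discriminate H
  | H : Some _ = Some _ |- _ => injection H; clear H; intros; subst
  end.

Lemma lift_lem : forall M : lpterm S,
  (forall M' d k, phi M = Some M' -> phi (llift d k M) = Some (plift d k M')) /\
  (forall A' d k, psi M = Some A' -> psi (llift d k M) = Some (plift d k A')).
Proof.
  induction M; try destruct IHM1 as [a1 b1]; try destruct IHM2 as [a2 b2];
   split; intros ? d k H; simpl in H |- *; try discriminate.
  - injection H; intros; subst. simpl. destruct (n <? k); reflexivity.
  - dest1 H. erewrite a1 by reflexivity. erewrite a2 by reflexivity. reflexivity.
  - destruct M1; simpl in H |- *; try discriminate. apply a2; auto.
  - dest1 H. erewrite b1 by reflexivity. erewrite a2 by reflexivity. reflexivity.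
  - dest1 H. erewrite b1 by reflexivity. erewrite b2 by reflexivity. reflexivity.
  - injection H; intros; subst; reflexivity.
  - injection H; intros; subst; reflexivity.
  - injection H; intros; subst; reflexivity.
Qed.

Lemma subst_lem : forall M : lpterm S,
  (forall M' N N' k, phi M = Some M' -> phi N = Some N' ->
     phi (lsubst k N M) = Some (psubst k N' M')) /\
  (forall A' N N' k, psi M = Some A' -> phi N = Some N' ->
     psi (lsubst k N M) = Some (psubst k N' A')).
Proof.
  induction M; try destruct IHM1 as [a1 b1]; try destruct IHM2 as [a2 b2];
   split; intros ? N N' k H H0; simpl in H |- *; try discriminate.
  - injection H; intros; subst. simpl. destruct (Nat.compare n k); auto. apply lift_lem; auto.
  - dest1 H. erewrite a1 by (reflexivity || eassumption). erewrite a2 by (reflexivity || eassumption). reflexivity.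
  - destruct M1; simpl in H |- *; try discriminate. apply a2; auto.
  - dest1 H. erewrite b1 by (reflexivity || eassumption). erewrite a2 by (reflexivity || eassumption). reflexivity.
  - dest1 H. erewrite b1 by (reflexivity || eassumption). erewrite b2 by (reflexivity || eassumption). reflexivity.
  - injection H; intros; subst; reflexivity.
  - injection H; intros; subst; reflexivity.
  - injection H; intros; subst; reflexivity.
Qed.

Lemma subst_lift : forall (M N : pterm S) k, psubst k N (plift 1 k M) = M.
Proof.
  induction M; simpl; intros; try (f_equal; auto; fail).
  destruct (Nat.ltb_spec n k).
  - simpl. destruct (Nat.compare_spec n k); try lia; auto.
  - simpl. destruct (Nat.compare_spec (n+1) k); try lia. f_equal; lia.
Qed.

Lemma plift0 : forall (M : pterm S) k, plift 0 k M = M.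
Proof.
  induction M; simpl; intros; try (f_equal; auto; fail).
  destruct (n <? k); f_equal; lia.
Qed.

Lemma star_ctx (f : pterm S -> pterm S) :
  (forall x y, pbeta x y -> pbeta (f x) (f y)) ->
  forall x y, pbeta_star x y -> pbeta_star (f x) (f y).
Proof.
  intros Hf x y H; induction H.
  - apply rt_step; auto.
  - apply rt_refl.
  - eapply rt_trans; eauto.
Qed.

Lemma star_app : forall a a' b b' : pterm S, pbeta_star a a' -> pbeta_star b b' ->
  pbeta_star (PApp a b) (PApp a' b').
Proof.
  intros. eapply rt_trans.
  - apply (star_ctx (fun x => PApp x b)); [constructor; auto|eauto].
  - apply (star_ctx (fun x => PApp a' x)); [constructor; auto|eauto].
Qed.
End X.

Theorem lemma5p11 (P : pts_spec) (HP : functional_spec P) :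
  (forall (M N : lpterm (sort P)) (M' N' : pterm (sort P)),
      wf_lp P M -> red_betaR P M N ->
      phi M = Some M' -> phi N = Some N' -> pbeta_star M' N') /\
  (forall (A B : lpterm (sort P)) (A' B' : pterm (sort P)),
      wf_lp P A -> red_betaR P A B ->
      psi A = Some A' -> psi B = Some B' -> pbeta_star A' B').
Proof.
  assert (K : forall M N, red_betaR P M N ->
    (forall M' N', phi M = Some M' -> phi N = Some N' -> pbeta_star M' N') /\
    (forall M' N', psi M = Some M' -> psi N = Some N' -> pbeta_star M' N')).
  { induction 1; split; intros ? ? H1 H2; simpl in H1, H2; try discriminate.
    - dest1 H1. dest1 E. rewrite (proj1 (subst_lem _ M) _ _ _ 0 E2 E0) in H2.
      injection H2; intros; subst. apply rt_step. constructor.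
    - injection H1; injection H2; intros; subst; apply rt_refl.
    - destall. simpl in *. destall.
      match goal with H : phi B = Some _, H' : phi (llift 1 0 B) = Some _ |- _ =>
        rewrite (proj1 (lift_lem _ B) _ 1 0 H) in H'; injection H'; intros; subst end.
      eapply rt_trans. apply star_app; [apply rt_step; apply pbeta_redex | apply rt_refl].
      simpl. apply rt_step. rewrite plift0.
      match goal with |- pbeta (PApp (PLam ?T (PPi (plift 1 0 ?a) ?X)) ?b) ?R =>
        replace R with (psubst 0 b (PPi (plift 1 0 a) X)) by (simpl; rewrite subst_lift; reflexivity) end.
      apply pbeta_redex.
    - dest1 H1. dest1 H2. apply star_app; [eapply (proj1 IHred_betaR); eauto | apply rt_refl].
    - destruct M; try discriminate. inversion H.
    - dest1 H1. dest1 H2. apply star_app; [apply rt_refl | eapply (proj1 IHred_betaR); eauto].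
    - destruct M; try discriminate. eapply (proj1 IHred_betaR); eauto.
    - dest1 H1. dest1 H2.
      match goal with |- pbeta_star (PLam ?a ?b) _ => apply (@star_ctx _ (fun x => PLam x b)) end; [constructor; auto | eapply (proj2 IHred_betaR); eauto].
    - dest1 H1. dest1 H2.
      match goal with |- pbeta_star (PLam ?a ?b) _ => apply (@star_ctx _ (fun x => PLam a x)) end; [constructor; auto | eapply (proj1 IHred_betaR); eauto].
    - dest1 H1. dest1 H2.
      match goal with |- pbeta_star (PPi ?a ?b) _ => apply (@star_ctx _ (fun x => PPi x b)) end; [constructor; auto | eapply (proj2 IHred_betaR); eauto].
    - dest1 H1. dest1 H2.
      match goal with |- pbeta_star (PPi ?a ?b) _ => apply (@star_ctx _ (fun x => PPi a x)) end; [constructor; auto | eapply (proj2 IHred_betaR); eauto]. }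
  split; intros ? ? ? ? _ Hr; [exact (proj1 (K _ _ Hr) _ _) | exact (proj2 (K _ _ Hr) _ _)].
Qed.
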